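(* Every separable connected almost totally disconnected compact space is metrizable.
   Context: For a set $\Gamma$, $\Sigma_0^1[0,1]^\Gamma$ is the subspace of $[0,1]^\Gamma$ (product topology) consisting of those $x$ with $x_\gamma\in\{0,1\}$ for all but countably many $\gamma$. A compact space is almost totally disconnected if it is homeomorphic to a subspace of $\Sigma_0^1[0,1]^\Gamma$ for some set $\Gamma$. *)

(* Defs.v *)
From Stdlib Require Import Reals List.
Open Scope R_scope.

Definition is_topology {X : Type} (op : (X -> Prop) -> Prop) : Prop :=
  op (fun _ => True) /\
  (forall U V, op U -> op V -> op (fun x => U x /\ V x)) /\
  (forall F : (X -> Prop) -> Prop, (forall U, F U -> op U) ->
     op (fun x => exists U, F U /\ U x)).

Definition countable_set {A : Type} (S : A -> Prop) : Prop :=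
  exists h : A -> nat, forall a b, S a -> S b -> h a = h b -> a = b.

Definition compact_space {X : Type} (op : (X -> Prop) -> Prop) : Prop :=
  forall F : (X -> Prop) -> Prop,
    (forall U, F U -> op U) ->
    (forall x, exists U, F U /\ U x) ->
    exists l : list (X -> Prop),
      (forall U, In U l -> F U) /\ (forall x, exists U, In U l /\ U x).

Definition connected_space {X : Type} (op : (X -> Prop) -> Prop) : Prop :=
  forall U V, op U -> op V ->
    (forall x, U x \/ V x) -> (forall x, ~ (U x /\ V x)) ->
    (forall x, ~ U x) \/ (forall x, ~ V x).

Definition separable_space {X : Type} (op : (X -> Prop) -> Prop) : Prop :=
  exists D : X -> Prop, countable_set D /\
    (forall U, op U -> (exists x, U x) -> exists x, U x /\ D x).

Definition metrizable_space {X : Type} (op : (X -> Prop) -> Prop) : Prop :=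
  exists d : X -> X -> R,
    (forall x y, d x y = 0 <-> x = y) /\
    (forall x y, d x y = d y x) /\
    (forall x y z, d x z <= d x y + d y z) /\
    (forall U, op U <->
       (forall x, U x -> exists eps, 0 < eps /\ forall y, d x y < eps -> U y)).

(* Product topology on R^Gamma = (Gamma -> R): basic neighbourhoods
   constrain finitely many coordinates. *)
Definition product_open {G : Type} (V : (G -> R) -> Prop) : Prop :=
  forall x, V x -> exists (gs : list G) (eps : R), 0 < eps /\
    forall y, (forall g, In g gs -> Rabs (y g - x g) < eps) -> V y.

Definition in_Sigma01 {G : Type} (x : G -> R) : Prop :=
  (forall g, 0 <= x g <= 1) /\
  countable_set (fun g => x g <> 0 /\ x g <> 1).

(* X is almost totally disconnected: homeomorphic to a subspace of
   Sigma_0^1[0,1]^Gamma (with the subspace topology of the product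
   topology) for some set Gamma. *)
Definition almost_totally_disconnected {X : Type}
    (op : (X -> Prop) -> Prop) : Prop :=
  exists (G : Type) (f : X -> (G -> R)),
    (forall x, in_Sigma01 (f x)) /\
    (forall x y, f x = f y -> x = y) /\
    (forall V, product_open V -> op (fun x => V (f x))) /\
    (forall U, op U -> exists V, product_open V /\ forall x, U x <-> V (f x)).

(* Main.v *)
Require Import Defs.
From Stdlib Require Import Reals List Lra Lia Arith Cantor ClassicalEpsilon FunctionalExtensionality PropExtensionality.
Open Scope R_scope.

Lemma op_ext {X} (op : (X -> Prop) -> Prop) (U V : X -> Prop) :
  (forall x, U x <-> V x) -> op U -> op V.
Proof.
  intros H HU. replace V with U; auto.
  apply functional_extensionality; intro x; apply propositional_extensionality; auto.
Qed.

Lemma po_interval {G} (g : G) a b : product_open (fun y : G -> R => a < y g < b).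
Proof.
  intros x Hx. exists (g :: nil), (Rmin (x g - a) (b - x g)). split.
  - apply Rmin_pos; lra.
  - intros y Hy. specialize (Hy g (or_introl eq_refl)).
    pose proof (Rmin_l (x g - a) (b - x g)). pose proof (Rmin_r (x g - a) (b - x g)).
    apply Rabs_def2 in Hy. lra.
Qed.

Lemma po_True {G} : product_open (fun _ : G -> R => True).
Proof. intros x _. exists nil, 1. split; [lra| auto]. Qed.

Lemma po_and {G} (V W : (G -> R) -> Prop) : product_open V -> product_open W ->
  product_open (fun y => V y /\ W y).
Proof.
  intros HV HW x [Vx Wx].
  destruct (HV x Vx) as [g1 [e1 [He1 H1]]]. destruct (HW x Wx) as [g2 [e2 [He2 H2]]].
  exists (g1 ++ g2), (Rmin e1 e2). split; [apply Rmin_pos; auto|].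
  intros y Hy. pose proof (Rmin_l e1 e2). pose proof (Rmin_r e1 e2). split.
  - apply H1; intros g Hg. assert (Rabs (y g - x g) < Rmin e1 e2) by (apply Hy; apply in_or_app; auto). lra.
  - apply H2; intros g Hg. assert (Rabs (y g - x g) < Rmin e1 e2) by (apply Hy; apply in_or_app; auto). lra.
Qed.

Definition tm {X G} (f : X -> G -> R) (K : nat -> option G) x y n : R :=
  match K n with Some g => Rabs (f x g - f y g) * / INR (S n) | None => 0 end.

Lemma inv_S n : 0 < / INR (S n) <= 1.
Proof.
  assert (1 <= INR (S n)) by (rewrite S_INR; pose proof (pos_INR n); lra).
  split. apply Rinv_0_lt_compat; lra.
  rewrite <- Rinv_1. apply Rinv_le_contravar; lra.
Qed.

Lemma tm_bound {X G} (f : X -> G -> R) (K : nat -> option G) (Hb : forall x g, 0 <= f x g <= 1) x y n :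
  0 <= tm f K x y n <= 1.
Proof.
  unfold tm. destruct (K n) as [g|]; [|lra].
  pose proof (inv_S n). pose proof (Hb x g). pose proof (Hb y g).
  assert (0 <= Rabs (f x g - f y g) <= 1) by (split; [apply Rabs_pos| apply Rabs_le; lra]).
  split. apply Rmult_le_pos; lra.
  replace 1 with (1*1) by ring. apply Rmult_le_compat; lra.
Qed.

Definition dm {X G} (f : X -> G -> R) (K : nat -> option G) (Hb : forall x g, 0 <= f x g <= 1) (x y : X) : R.
Proof.
  refine (proj1_sig (completeness (fun r => exists n, r = tm f K x y n) _ _)).
  - exists 1. intros r [n ->]. apply (tm_bound f K Hb).
  - exists (tm f K x y 0). eauto.
Defined.

Lemma dm_ge {X G} (f : X -> G -> R) (K : nat -> option G) Hb (x y : X) n : tm f K x y n <= dm f K Hb x y.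
Proof.
  unfold dm. match goal with |- context [proj1_sig ?c] => destruct (proj2_sig c) as [Hu Hl] end. apply Hu; eauto.
Qed.

Lemma dm_le {X G} (f : X -> G -> R) (K : nat -> option G) Hb (x y : X) M :
  (forall n, tm f K x y n <= M) -> dm f K Hb x y <= M.
Proof.
  intro H. unfold dm. match goal with |- context [proj1_sig ?c] => destruct (proj2_sig c) as [Hu Hl] end. apply Hl.
  intros r [n Hr]; subst r; auto.
Qed.

Definition Kdef {G} (P : nat -> G -> Prop) (n : nat) : option G :=
  match excluded_middle_informative (exists g, P n g) with
  | left H => Some (proj1_sig (constructive_indefinite_description _ H))
  | right _ => None end.

Lemma Kdef_spec {G} (P : nat -> G -> Prop) n g : P n g -> exists g', Kdef P n = Some g' /\ P n g'.
Proof.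
  intro H. unfold Kdef. destruct (excluded_middle_informative _) as [H'|H'].
  - destruct (constructive_indefinite_description _ H') as [g' Hg']. simpl. eauto.
  - exfalso; eauto.
Qed.

Lemma pair_inj2 a b c d : to_nat (a, b) = to_nat (c, d) -> a = c /\ b = d.
Proof.
  intro H. assert (of_nat (to_nat (a,b)) = of_nat (to_nat (c,d))) by congruence.
  rewrite !cancel_of_to in H0. inversion H0; auto.
Qed.

Lemma tm_sym {X G} (f : X -> G -> R) K (x y : X) n : tm f K x y n = tm f K y x n.
Proof. unfold tm. destruct (K n); auto. rewrite Rabs_minus_sym; auto. Qed.

Lemma tm_tri {X G} (f : X -> G -> R) K (x y z : X) n : tm f K x z n <= tm f K x y n + tm f K y z n.
Proof.
  unfold tm. destruct (K n) as [g|]; [|lra]. pose proof (inv_S n).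
  rewrite <- Rmult_plus_distr_r. apply Rmult_le_compat_r; [lra|].
  replace (f x g - f z g) with ((f x g - f y g) + (f y g - f z g)) by ring. apply Rabs_triang.
Qed.

Lemma tm_xx {X G} (f : X -> G -> R) K (x : X) n : tm f K x x n = 0.
Proof. unfold tm. destruct (K n); auto. rewrite Rminus_diag, Rabs_R0; ring. Qed.

Lemma tm_le_inv {X G} (f : X -> G -> R) K (Hb : forall x g, 0 <= f x g <= 1) (x y : X) n :
  tm f K x y n <= / INR (S n).
Proof.
  pose proof (inv_S n). unfold tm. destruct (K n) as [g|]; [|lra].
  pose proof (Hb x g). pose proof (Hb y g).
  assert (0 <= Rabs (f x g - f y g) <= 1) by (split; [apply Rabs_pos| apply Rabs_le; lra]).
  replace (/ INR (S n)) with (1 * / INR (S n)) at 2 by ring. apply Rmult_le_compat_r; lra.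
Qed.

Fixpoint nb {G} (K : nat -> option G) (c : G -> R) (r : R) (N : nat) (y : G -> R) : Prop :=
  match N with O => True | S N => nb K c r N y /\
    match K N with Some g => c g - r < y g < c g + r | None => True end end.

Lemma nb_open {G} K (c : G -> R) r N : product_open (nb K c r N).
Proof.
  induction N; simpl. apply po_True. apply po_and; auto.
  destruct (K N). apply po_interval. apply po_True.
Qed.

Lemma nb_center {G} K (c : G -> R) r N : 0 < r -> nb K c r N c.
Proof. intro Hr; induction N; simpl; auto. split; auto. destruct (K N); auto; lra. Qed.

Lemma nb_spec {G} K (c : G -> R) r N y : nb K c r N y ->
  forall k g, (k < N)%nat -> K k = Some g -> c g - r < y g < c g + r.
Proof.
  induction N; intros H k g Hk Hg. lia.
  destruct H as [H1 H2]. destruct (Nat.eq_dec k N) as [->|].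
  rewrite Hg in H2; auto. apply IHN with k; auto. lia.
Qed.

Lemma small_inv eps : 0 < eps -> exists N, / INR (S N) < eps.
Proof.
  intro He. destruct (INR_unbounded (/ eps)) as [N HN]. exists N.
  rewrite S_INR. pose proof (Rinv_0_lt_compat _ He).
  replace eps with (/ / eps) by (field; lra).
  apply Rinv_lt_contravar. apply Rmult_lt_0_compat; lra. lra.
Qed.

Lemma fin_close {X G} (f : X -> G -> R) K Hb (Cset : G -> Prop)
  (HK : forall g, Cset g -> exists n, K n = Some g)
  (Hconst : forall g, ~ Cset g -> forall x y, f x g = f y g) (x : X) e0 :
  0 < e0 -> forall gs, exists del, 0 < del /\ forall y, dm f K Hb x y < del ->
     forall g, In g gs -> Rabs (f y g - f x g) < e0.
Proof.
  intros He0 gs. induction gs as [|g gs IH].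
  - exists 1. split; [lra|]. intros y _ g [].
  - destruct IH as [d1 [Hd1 H1]].
    destruct (classic (Cset g)) as [Hc|Hc].
    + destruct (HK g Hc) as [n Hn]. pose proof (inv_S n).
      exists (Rmin d1 (e0 * / INR (S n))). split.
      { apply Rmin_pos; auto. apply Rmult_lt_0_compat; lra. }
      intros y Hy. pose proof (Rmin_l d1 (e0 * / INR (S n))). pose proof (Rmin_r d1 (e0 * / INR (S n))).
      intros g' [<-|Hin]; [|apply H1; auto; lra].
      pose proof (dm_ge f K Hb x y n) as Ht. unfold tm in Ht. rewrite Hn in Ht.
      rewrite Rabs_minus_sym. apply Rmult_lt_reg_r with (/ INR (S n)); lra.
    + exists d1. split; auto. intros y Hy g' [<-|Hin]; [|apply H1; auto].
      rewrite (Hconst g Hc y x), Rminus_diag, Rabs_R0. auto.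
Qed.
Close Scope R_scope.

Theorem mainTheorem5 (X : Type) (op : (X -> Prop) -> Prop) :
  is_topology op ->
  compact_space op ->
  separable_space op ->
  connected_space op ->
  almost_totally_disconnected op ->
  metrizable_space op.
Proof.
  intros [HtT [HtI HtU]] _ [D [[hD HhD] HD]] Hconn [G [f [Hsig [Hinj [Hcont Hemb]]]]].
  assert (Hb : forall x g, (0 <= f x g <= 1)%R) by (intros x g; apply (proj1 (Hsig x))).
  pose (hh := fun d => proj1_sig (constructive_indefinite_description _ (proj2 (Hsig d)))).
  assert (Hhh : forall d a b, (f d a <> 0 /\ f d a <> 1)%R -> (f d b <> 0 /\ f d b <> 1)%R ->
     hh d a = hh d b -> a = b).
  { intros d. unfold hh. destruct (constructive_indefinite_description _ _) as [h Hh]. simpl. auto. }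
  pose (Cset := fun g => exists d, D d /\ f d g <> 0%R /\ f d g <> 1%R).
  pose (P := fun n g => exists d, D d /\ f d g <> 0%R /\ f d g <> 1%R /\ n = to_nat (hD d, hh d g)).
  pose (K := Kdef P).
  assert (HK : forall g, Cset g -> exists n, K n = Some g).
  { intros g [d [Dd [H0 H1]]]. exists (to_nat (hD d, hh d g)).
    destruct (Kdef_spec P (to_nat (hD d, hh d g)) g) as [g' [Hg' [d' [Dd' [H0' [H1' Heq]]]]]].
    { exists d; auto. }
    unfold K. rewrite Hg'. destruct (pair_inj2 _ _ _ _ Heq) as [E1 E2].
    assert (d' = d) by (apply HhD; auto). subst d'.
    f_equal. apply (Hhh d); auto. }
  assert (Hconst : forall g, ~ Cset g -> forall x y, f x g = f y g).
  { intros g Hc.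
    assert (H01 : forall x, f x g = 0%R \/ f x g = 1%R).
    { intro x. destruct (classic (f x g = 0%R \/ f x g = 1%R)) as [|Hn]; auto. exfalso.
      assert (Hx : (0 < f x g < 1)%R) by (pose proof (Hb x g); lra).
      assert (Ho : op (fun z => (0 < f z g < 1)%R)).
      { apply (Hcont (fun y => (0 < y g < 1)%R)). apply po_interval. }
      destruct (HD _ Ho (ex_intro _ x Hx)) as [z [Hz Dz]].
      apply Hc. exists z. split; auto. split; lra. }
    assert (Ho1 : op (fun z => (/2 < f z g < 2)%R)) by (apply (Hcont (fun y => (/2 < y g < 2)%R)); apply po_interval).
    assert (Ho2 : op (fun z => (-1 < f z g < /2)%R)) by (apply (Hcont (fun y => (-1 < y g < /2)%R)); apply po_interval).
    assert (Hcov : forall x, (/2 < f x g < 2 \/ -1 < f x g < /2)%R).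
    { intro x. destruct (H01 x) as [E|E]; rewrite E; [right|left]; lra. }
    assert (Hdis : forall x, ~ ((/2 < f x g < 2) /\ (-1 < f x g < /2))%R) by (intros x Hx; lra).
    destruct (Hconn _ _ Ho1 Ho2 Hcov Hdis) as [Hn|Hn].
    - intros x y. specialize (Hn x) as Hx. specialize (Hn y) as Hy.
      destruct (H01 x) as [E|E]; destruct (H01 y) as [E'|E']; rewrite ?E, ?E' in *; auto; lra.
    - intros x y. specialize (Hn x) as Hx. specialize (Hn y) as Hy.
      destruct (H01 x) as [E|E]; destruct (H01 y) as [E'|E']; rewrite ?E, ?E' in *; auto; lra.
  }
  exists (dm f K Hb).
  split; [|split; [|split]].
  - intros x y; split.
    + intro H. apply Hinj. apply functional_extensionality; intro g.
      destruct (classic (Cset g)) as [Hc|Hc]; [|apply Hconst; auto].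
      destruct (HK g Hc) as [n Hn]. pose proof (dm_ge f K Hb x y n) as Ht.
      unfold tm in Ht. rewrite Hn, H in Ht. pose proof (inv_S n).
      assert (Rabs (f x g - f y g) <= 0)%R.
      { apply Rmult_le_reg_r with (/ INR (S n))%R; lra. }
      pose proof (Rabs_pos (f x g - f y g)).
      assert (Rabs (f x g - f y g) = 0)%R by lra. destruct (Req_dec (f x g) (f y g)) as [|Hne]; auto. exfalso. apply (Rabs_no_R0 (f x g - f y g)); lra.
    + intros <-. apply Rle_antisym. apply dm_le. intro n. rewrite tm_xx. lra.
      pose proof (dm_ge f K Hb x x 0). rewrite tm_xx in H. auto.
  - intros x y. apply Rle_antisym; apply dm_le; intro n; rewrite tm_sym; apply dm_ge.
  - intros x y z. apply dm_le. intro n. pose proof (tm_tri f K x y z n).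
    pose proof (dm_ge f K Hb x y n). pose proof (dm_ge f K Hb y z n). lra.
  - intro U. split.
    + intros HU x Ux. destruct (Hemb U HU) as [V [HV HUV]].
      destruct (HV (f x) (proj1 (HUV x) Ux)) as [gs [e0 [He0 Hgs]]].
      destruct (fin_close f K Hb Cset HK Hconst x e0 He0 gs) as [del [Hdel Hc]].
      exists del. split; auto. intros y Hy. apply HUV. apply Hgs. intros g Hg. apply Hc; auto.
    + intro H.
      apply op_ext with (fun z => exists W, (op W /\ forall w, W w -> U w) /\ W z).
      2: { apply HtU. intros W [HW _]; auto. }
      intro z. split; [intros [W [[_ HW] Wz]]; auto|]. intro Uz.
      destruct (H z Uz) as [eps [Heps Hball]].
      destruct (small_inv (eps/2)) as [N HN]; [lra|].
      exists (fun w => nb K (f z) (eps/2) N (f w)). split; [split|].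
      * apply (Hcont (nb K (f z) (eps/2) N)). apply nb_open.
      * intros w Hw. apply Hball. cut (dm f K Hb z w <= eps/2)%R; [lra|].
        apply dm_le. intro n. destruct (le_lt_dec N n) as [Hle|Hlt].
        -- pose proof (tm_le_inv f K Hb z w n).
           assert (/ INR (S n) <= / INR (S N))%R.
           { apply Rinv_le_contravar. apply lt_0_INR; lia. apply le_INR; lia. }
           lra.
        -- unfold tm. destruct (K n) as [g|] eqn:Eg; [|lra].
           pose proof (nb_spec K (f z) (eps/2) N (f w) Hw n g Hlt Eg).
           pose proof (inv_S n).
           assert (Rabs (f z g - f w g) < eps/2)%R by (apply Rabs_def1; lra).
           assert (Rabs (f z g - f w g) * / INR (S n) <= Rabs (f z g - f w g))%R.
           { replace (Rabs (f z g - f w g)) with (Rabs (f z g - f w g) * 1)%R at 2 by ring.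
             apply Rmult_le_compat_l; [apply Rabs_pos|lra]. }
           lra.
      * apply nb_center. lra.
Qed.
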